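(* Let $A=\begin{pmatrix} a & b\\ c & d\end{pmatrix}$ be a $2\times 2$ matrix with positive rational entries. The alternate minimization limit $S(A)$ of $A$ has rational entries if and only if $ad/(bc)$ is the square of a rational number.
   Context: For an $n\times n$ matrix $A=(a_{i,j})$ let $\mathrm{row}_i(A)=\sum_j a_{i,j}$ and $\mathrm{col}_j(A)=\sum_i a_{i,j}$. For a matrix $A$ with positive entries let $X(A)=\mathrm{diag}(1/\mathrm{row}_1(A),\ldots,1/\mathrm{row}_n(A))$ and $Y(A)=\mathrm{diag}(1/\mathrm{col}_1(A),\ldots,1/\mathrm{col}_n(A))$. The alternate minimization sequence of $A$ is defined by $A^{(0)}=A$, $A^{(2k+1)}=A^{(2k)}\,Y(A^{(2k)})$ and $A^{(2k+2)}=X(A^{(2k+1)})\,A^{(2k+1)}$ for $k\ge 0$; for positive matrices this sequence converges, and its limit $S(A)=\lim_{\ell\to\infty}A^{(\ell)}$ (a doubly stochastic matrix, i.e. all row and column sums equal $1$) is called the alternate minimization limit of $A$. *)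

(* Defs.v *)
From HB Require Import structures.
From mathcomp Require Import all_boot all_order all_algebra.
From mathcomp Require Import all_classical all_reals all_analysis.
Set Implicit Arguments. Unset Strict Implicit. Unset Printing Implicit Defensive.
Import Order.TTheory GRing.Theory Num.Theory numFieldNormedType.Exports.
Local Open Scope ring_scope.

Section AltMin.
Variables (R : realType) (n : nat).

Definition rowsum (A : 'M[R]_n) (i : 'I_n) : R := \sum_(j < n) A i j.
Definition colsum (A : 'M[R]_n) (j : 'I_n) : R := \sum_(i < n) A i j.

Definition Xmx (A : 'M[R]_n) : 'M[R]_n := diag_mx (\row_i (rowsum A i)^-1).
Definition Ymx (A : 'M[R]_n) : 'M[R]_n := diag_mx (\row_j (colsum A j)^-1).

Fixpoint altmin (A : 'M[R]_n) (l : nat) : 'M[R]_n :=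
  match l with
  | 0 => A
  | l'.+1 => let B := altmin A l' in
             if odd l' then Xmx B *m B else B *m Ymx B
  end.

Definition altmin_limit (A : 'M[R]_n) : 'M[R]_n :=
  \matrix_(i, j) limn (fun l => altmin A l i j).

End AltMin.

Definition is_rational {R : realType} (x : R) : Prop := exists q : rat, x = ratr q.

(* Main.v *)
Require Import Defs.
From HB Require Import structures.
From mathcomp Require Import all_boot all_order all_algebra.
From mathcomp Require Import all_classical all_reals all_analysis.
From mathcomp Require Import ring lra zify.
Import Order.TTheory GRing.Theory Num.Theory numFieldNormedType.Exports.
Local Open Scope ring_scope.
Local Open Scope classical_set_scope.

Section Core.
Variable R : realType.

Definition m22 (x y z w : R) : 'M[R]_2 :=
  \matrix_(i < 2, j < 2) if i == 0%N :> nat then (if j == 0%N :> nat then x else y)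
            else (if j == 0%N :> nat then z else w).

Lemma X_m22 x y z w : Xmx (m22 x y z w) *m m22 x y z w =
   m22 (x/(x+y)) (y/(x+y)) (z/(z+w)) (w/(z+w)).
Proof.
apply/matrixP => i j; rewrite /Xmx mul_diag_mx !mxE /rowsum.
rewrite !big_ord_recr big_ord0 /= !mxE /=.
by case: i => [[|[|i]] Hi] //=; case: j => [[|[|j]] Hj] //=; rewrite add0r mulrC.
Qed.

Lemma m22_Y x y z w : m22 x y z w *m Ymx (m22 x y z w) =
   m22 (x/(x+z)) (y/(y+w)) (z/(x+z)) (w/(y+w)).
Proof.
apply/matrixP => i j; rewrite /Ymx mul_mx_diag !mxE /colsum.
rewrite !big_ord_recr big_ord0 /= !mxE /=.
by case: i => [[|[|i]] Hi] //=; case: j => [[|[|j]] Hj] //=; rewrite add0r.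
Qed.

Definition mob (p q r w t : R) := (p * t + q) / (r * t + w).

Variables (s : R) (hs : 0 < s).
Let K := s ^+ 2.
Lemma K_gt0 : 0 < K. Proof. by rewrite /K exprn_gt0. Qed.

Definition Cmx t := m22 (mob 1 0 1 1 t) (mob 1 0 1 K t) (mob 0 1 1 1 t) (mob 0 K 1 K t).
Definition Rmx t := m22 (mob 1 K 2 (1+K) t) (mob 1 1 2 (1+K) t)
                        (mob 1 K (1+K) (2*K) t) (mob K K (1+K) (2*K) t).
Definition fK t := mob (1+K) (2*K) 2 (1+K) t.

Lemma XC t : 0 < t -> Xmx (Cmx t) *m Cmx t = Rmx t.
Proof.
move=> ht; have hK := K_gt0.
rewrite X_m22 /Rmx /mob; congr m22; field.
all: repeat (apply/andP; split); apply: lt0r_neq0; nra.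
Qed.

Lemma YR t : 0 < t -> Rmx t *m Ymx (Rmx t) = Cmx (fK t).
Proof.
move=> ht; have hK := K_gt0.
rewrite m22_Y /Cmx /fK /mob; congr m22; field.
all: repeat (apply/andP; split); apply: lt0r_neq0; nra.
Qed.

Lemma fK_gt0 t : 0 < t -> 0 < fK t.
Proof. move=> ht; have hK := K_gt0. rewrite /fK /mob. apply: divr_gt0; nra. Qed.

Lemma RC : Rmx s = Cmx s.
Proof.
have hs' := hs; have hK := K_gt0; rewrite /Rmx /Cmx /mob /K in hK *; congr m22; field; repeat (apply/andP; split); apply: lt0r_neq0; nra.
Qed.

Lemma fK_contr t : 0 <= t -> `|fK t - s| <= ((1 - K) / (1 + K)) ^+ 2 * `|t - s|.
Proof.
move=> ht; have hs' := hs; have hK := K_gt0.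
have -> : fK t - s = (1 - K) ^+ 2 * (t - s) / ((2 * t + 1 + K) * (2 * s + 1 + K)).
  rewrite /fK /mob /K in hK *; field.
  repeat (apply/andP; split); apply: lt0r_neq0; nra.
have hD : (1 + K) ^+ 2 <= (2 * t + 1 + K) * (2 * s + 1 + K) by nra.
have hD0 : 0 < (2 * t + 1 + K) * (2 * s + 1 + K) by nra.
rewrite normf_div normrM (ger0_norm (sqr_ge0 _)) (gtr0_norm hD0).
rewrite ler_pdivrMr //.
set u := ((1 - K) / (1 + K)) ^+ 2.
have hu : u * (1 + K) ^+ 2 = (1 - K) ^+ 2.
  rewrite /u expr_div_n; field; apply: lt0r_neq0; nra.
have hu0 : 0 <= u by rewrite /u sqr_ge0.
have hn : 0 <= `|t - s| by [].
have hun : 0 <= u * `|t - s| by apply: mulr_ge0.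
rewrite -hu; move: hD hun; set D := (_ * _); set n := `|_|; move: (1+K) => k; nra.
Qed.

Lemma theta_lt1 : ((1 - K) / (1 + K)) ^+ 2 < 1.
Proof.
have hK := K_gt0.
rewrite expr_div_n ltr_pdivrMr ?mul1r; last by apply: exprn_gt0; lra.
nra.
Qed.

Let th := ((1 - K) / (1 + K)) ^+ 2.
Variables (t0 : R) (ht0 : 0 < t0).
Definition tseq k := iter k fK t0.

Lemma tseq_gt0 k : 0 < tseq k.
Proof. elim: k => [|k IH] //=; exact: fK_gt0. Qed.

Lemma tseq_bound k : `|tseq k - s| <= `|t0 - s| * th ^+ k.
Proof.
elim: k => [|k IH]; first by rewrite expr0 mulr1.
have H := @fK_contr (tseq k) (ltW (tseq_gt0 k)); rewrite -/th in H.
rewrite /=; apply: le_trans H _.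
rewrite [th ^+ _]exprS [X in _ <= X]mulrCA; apply: ler_wpM2l => //.
by rewrite /th sqr_ge0.
Qed.

Lemma tseq_cvg : tseq k @[k --> \oo] --> s.
Proof.
have hg := @cvg_geometric R `|t0 - s| th.
have hth : `|th| < 1 by rewrite ger0_norm ?theta_lt1 // /th sqr_ge0.
have {}hg := hg hth.
apply: (@squeeze_cvgr _ _ _ _ (fun k => s - geometric `|t0 - s| th k)
            (fun k => s + geometric `|t0 - s| th k)).
- apply: filterE => k /=.
  have := tseq_bound k; rewrite /geometric /=.
  move=> H; apply/andP; split.
  + by move: H => /ler_normlP [H1 H2]; lra.
  + by move: H => /ler_normlP [H1 H2]; lra.
- rewrite -[X in _ --> X]subr0; apply: cvgB => //; exact: cvg_cst.
- rewrite -[X in _ --> X]addr0; apply: cvgD => //; exact: cvg_cst.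
Qed.

Definition tau l := tseq ((l - 1) %/ 2).

Lemma tau_cvg : tau l @[l --> \oo] --> s.
Proof.
apply: (cvg_comp (fun l => (l - 1) %/ 2)%N tseq); last exact: tseq_cvg.
apply: (cvg_comp (fun l => (l - 1))%N (fun l => l %/ 2)%N).
  exact: cvg_subnr.
exact: cvg_divnr.
Qed.

Lemma mob_cvg p q r w : r * s + w != 0 ->
  mob p q r w (tau l) @[l --> \oo] --> mob p q r w s.
Proof.
move=> hne; rewrite /mob.
have h1 : forall a b, (a * tau l + b) @[l --> \oo] --> a * s + b.
  move=> a b; apply: cvgD; last exact: cvg_cst.
  apply: cvgM; [exact: cvg_cst | exact: tau_cvg].
apply: cvgM; first exact: h1.
exact: cvgV.
Qed.

Lemma m22_cvg (x y z w : nat -> R) x0 y0 z0 w0 i j :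
  x l @[l --> \oo] --> x0 -> y l @[l --> \oo] --> y0 ->
  z l @[l --> \oo] --> z0 -> w l @[l --> \oo] --> w0 ->
  m22 (x l) (y l) (z l) (w l) i j @[l --> \oo] --> m22 x0 y0 z0 w0 i j.
Proof.
move=> hx hy hz hw.
have -> : (fun l => m22 (x l) (y l) (z l) (w l) i j) =
  (fun l => if i == 0%N :> nat then (if j == 0%N :> nat then x l else y l)
            else (if j == 0%N :> nat then z l else w l)).
  by apply/funext => l; rewrite mxE.
by rewrite mxE; case: ifP => _; case: ifP.
Qed.

Lemma Cmx_cvg i j : Cmx (tau l) i j @[l --> \oo] --> Cmx s i j.
Proof.
have hs' := hs; have hK := K_gt0.
by apply: m22_cvg; apply: mob_cvg; apply: lt0r_neq0; nra.
Qed.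

Lemma Rmx_cvg i j : Rmx (tau l) i j @[l --> \oo] --> Cmx s i j.
Proof.
have hs' := hs; have hK := K_gt0.
by rewrite -RC; apply: m22_cvg; apply: mob_cvg; apply: lt0r_neq0; nra.
Qed.

Variable A : 'M[R]_2.
Hypothesis hA : A *m Ymx A = Cmx t0.

Lemma altminS l : altmin A l.+1 =
  if odd l then Xmx (altmin A l) *m altmin A l else altmin A l *m Ymx (altmin A l).
Proof. by []. Qed.

Lemma altmin_eq k : altmin A k.*2.+1 = Cmx (tseq k) /\ altmin A k.*2.+2 = Rmx (tseq k).
Proof.
elim: k => [|k IH].
  by split; rewrite !altminS /= ?hA // XC.
have E1 : altmin A k.+1.*2.+1 = Cmx (tseq k.+1).
  by rewrite doubleS altminS IH.2 /= odd_double /= YR //; exact: (tseq_gt0 k).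
split => //.
by rewrite altminS E1 /= odd_double /= XC //; apply: fK_gt0; apply: tseq_gt0.
Qed.

Lemma altmin_tau l : (0 < l)%N ->
  altmin A l = if odd l then Cmx (tau l) else Rmx (tau l).
Proof.
case: l => // m _; rewrite -(odd_double_half m).
case: (odd m); rewrite ?add1n ?add0n; set k := m./2.
  rewrite (altmin_eq k).2 /= odd_double /= /tau.
  by congr Rmx; congr tseq; lia.
rewrite (altmin_eq k).1 /= odd_double /= /tau.
by congr Cmx; congr tseq; lia.
Qed.

Lemma altmin_cvg i j : altmin A l i j @[l --> \oo] --> Cmx s i j.
Proof.
apply/cvgrPdist_lt => e he.
move/cvgrPdist_lt: (Cmx_cvg i j) => /(_ e he) H1.
move/cvgrPdist_lt: (Rmx_cvg i j) => /(_ e he) H2.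
apply: filterS3 H1 H2 (nbhs_infty_gt 0) => l h1 h2 hl.
by rewrite altmin_tau //; case: (odd l).
Qed.
End Core.

Section Rat.
Variable R : realType.
Lemma rat_ratr (q : rat) : is_rational (ratr q : R). Proof. by exists q. Qed.
Lemma rat0 : is_rational (0 : R). Proof. by exists 0; rewrite rmorph0. Qed.
Lemma rat1 : is_rational (1 : R). Proof. by exists 1; rewrite rmorph1. Qed.
Lemma rat_add (x y : R) : is_rational x -> is_rational y -> is_rational (x + y).
Proof. by move=> [p ->] [q ->]; exists (p + q); rewrite rmorphD. Qed.
Lemma rat_mul (x y : R) : is_rational x -> is_rational y -> is_rational (x * y).
Proof. by move=> [p ->] [q ->]; exists (p * q); rewrite rmorphM. Qed.
Lemma rat_inv (x : R) : is_rational x -> is_rational (x^-1).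
Proof. by move=> [p ->]; exists (p^-1); rewrite fmorphV. Qed.
Lemma rat_exp (x : R) n : is_rational x -> is_rational (x ^+ n).
Proof. by move=> [p ->]; exists (p ^+ n); rewrite rmorphXn. Qed.
End Rat.

Theorem corollary5 (R : realType) (a b c d : rat)
  (ha : 0 < a) (hb : 0 < b) (hc : 0 < c) (hd : 0 < d) :
  let A : 'M[R]_2 :=
    \matrix_(i < 2, j < 2)
      ratr (if i == 0%N :> nat then (if j == 0%N :> nat then a else b)
            else (if j == 0%N :> nat then c else d)) in
  (forall i j : 'I_2, is_rational (altmin_limit A i j)) <->
  (exists q : rat, a * d / (b * c) = q ^+ 2).
Proof.
move=> A.
set ka : R := ratr a; set kb : R := ratr b; set kc : R := ratr c; set kd : R := ratr d.
have hka : 0 < ka by rewrite ltr0q. have hkb : 0 < kb by rewrite ltr0q.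
have hkc : 0 < kc by rewrite ltr0q. have hkd : 0 < kd by rewrite ltr0q.
set k0 := a * d / (b * c).
have hK0 : ratr k0 = ka * kd / (kb * kc) :> R by rewrite fmorph_div !rmorphM.
set s : R := Num.sqrt (ratr k0).
have hs : 0 < s by rewrite sqrtr_gt0 hK0; apply: divr_gt0; apply: mulr_gt0.
have hsK : s ^+ 2 = ratr k0 by rewrite sqr_sqrtr // hK0; apply: ltW; apply: divr_gt0; apply: mulr_gt0.
have hAm : A = @m22 R ka kb kc kd :> 'M[R]_2.
  apply/matrixP => i j; rewrite !mxE.
  by case: i => [[|[|i]] Hi] //=; case: j => [[|[|j]] Hj].
clearbody ka kb kc kd.
have hA : A *m Ymx A = Cmx R s (ka / kc).
  by rewrite hAm m22_Y /Cmx /mob hsK hK0; congr m22; field;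
    repeat (apply/andP; split); apply: lt0r_neq0; nra.
have hlim : forall i j, altmin_limit A i j = Cmx R s s i j.
  move=> i j; rewrite mxE; apply: cvg_lim => //.
  exact: (altmin_cvg _ _ hs _ (divr_gt0 hka hkc) _ hA i j).
have hs1 : s + 1 != 0 by apply: lt0r_neq0; lra.
split.
  move=> H.
  have [q1 Hq1] := H ord0 ord0; have [q2 Hq2] := H (@Ordinal 2 1 isT) ord0.
  rewrite !hlim !mxE /= /mob in Hq1 Hq2.
  have hq2 : ratr q2 != 0 :> R.
    rewrite -Hq2 mul0r add0r !mul1r; apply: lt0r_neq0; rewrite invr_gt0; lra.
  have Es : s = ratr (q1 / q2).
    have E : ratr (q1 / q2) = ratr q1 / ratr q2 :> R by rewrite fmorph_div.
    by rewrite E -Hq1 -Hq2 !mul1r mul0r add0r addr0; field.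
  have inj : forall x y : rat, ratr x = ratr y :> R -> x = y.
    by move=> x y; exact: fmorph_inj.
  exists (q1 / q2); apply: inj.
  have E2 : ratr ((q1 / q2) ^+ 2) = (ratr (q1 / q2)) ^+ 2 :> R by rewrite rmorphXn.
  by rewrite E2 -Es hsK.
move=> [q Hq].
have Es : s = ratr `|q|.
  by rewrite /s Hq rmorphXn sqrtr_sqr ratr_norm.
move=> i j; rewrite hlim /Cmx Es.
have hr := @rat_ratr R; have h0 := @rat0 R; have h1 := @rat1 R.
rewrite mxE; case: ifP => _; case: ifP => _; rewrite /mob;
  repeat first [ exact: h0 | exact: h1 | exact: hr
               | apply: rat_add | apply: rat_mul | apply: rat_inv | apply: rat_exp ].
Qed.
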